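(* Let $L=\{\ell_1,\dots,\ell_n\}$, $R=\{r_1,\dots,r_d\}$ and let $T_1,T_2$ be two compatible spanning trees of the complete bipartite graph on $L\sqcup R$ with right degree vectors $v$ and $v+e_p-e_q$ respectively. If $(\ell_s,r_p)$ is an edge of $T_1$, then it is also an edge of $T_2$. Furthermore, the degree of $\ell_s$ in $T_1$ is greater than or equal to its degree in $T_2$.
   Context: Graphs are identified with edge sets; right degree vector $=(\deg r_1,\dots,\deg r_d)$; $e_p$ is a standard unit vector. Two graphs are compatible if for all $J\subseteq L$, $I\subseteq R$ such that both contain a perfect matching between $J$ and $I$ (as subgraphs), these perfect matchings are equal. *)

(* Defs.v *)
From mathcomp Require Import all_boot.
Set Implicit Arguments. Unset Strict Implicit. Unset Printing Implicit Defensive.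

(* A subgraph of K_{n,d} is identified with its edge set,
   a set of pairs (i, j) meaning the edge (l_i, r_j). *)
Definition bvert (n d : nat) : finType := ('I_n + 'I_d)%type.
Definition bgraph (n d : nat) := {set 'I_n * 'I_d}.

Definition badj n d (G : bgraph n d) : rel (bvert n d) :=
  fun u v => match u, v with
             | inl i, inr j => (i, j) \in G
             | inr j, inl i => (i, j) \in G
             | _, _ => false
             end.

Definition bconnected n d (G : bgraph n d) : Prop :=
  forall u v : bvert n d, connect (badj G) u v.

Definition bacyclic n d (G : bgraph n d) : Prop :=
  forall c : seq (bvert n d), uniq c -> 2 < size c -> ~~ cycle (badj G) c.

Definition spanning_tree n d (G : bgraph n d) : Prop :=
  bconnected G /\ bacyclic G.

Definition ldeg n d (G : bgraph n d) (i : 'I_n) : nat := #|[set j | (i, j) \in G]|.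
Definition rdeg n d (G : bgraph n d) (j : 'I_d) : nat := #|[set i | (i, j) \in G]|.

Definition perfect_matching_in n d (G : bgraph n d) (J : {set 'I_n}) (I : {set 'I_d})
  (M : bgraph n d) : Prop :=
  [/\ M \subset G,
      (forall e, e \in M -> e.1 \in J /\ e.2 \in I),
      (forall i, i \in J -> #|[set j | (i, j) \in M]| = 1) &
      (forall j, j \in I -> #|[set i | (i, j) \in M]| = 1)].

Definition compatible n d (G1 G2 : bgraph n d) : Prop :=
  forall (J : {set 'I_n}) (I : {set 'I_d}) (M1 M2 : bgraph n d),
    perfect_matching_in G1 J I M1 -> perfect_matching_in G2 J I M2 -> M1 = M2.

(* Main.v *)
Require Import Defs.
From mathcomp Require Import all_boot zify.
Set Implicit Arguments. Unset Strict Implicit. Unset Printing Implicit Defensive.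


Section Rooted.
Variables (V : finType) (e : rel V) (side : V -> bool).
Hypothesis esym : symmetric e.
Hypothesis eside : forall u v, e u v -> side u != side v.
Hypothesis conn : forall u v, connect e u v.
Hypothesis acyc : forall c : seq V, uniq c -> 2 < size c -> ~~ cycle e c.
Variable r : V.

Fixpoint within k v := if k is k'.+1 then within k' v || [exists u, within k' u && e u v] else v == r.

Lemma within_path c : path e r c -> within (size c) (last r c).
Proof.
elim/last_ind: c => [|c x IH] /=; first by rewrite eqxx.
rewrite rcons_path => /andP[/IH H He]; rewrite size_rcons last_rcons /=.
by apply/orP; right; apply/existsP; exists (last r c); rewrite H.
Qed.

Lemma within_ex v : exists k, within k v.
Proof. by have /connectP[c pc ->] := conn r v; exists (size c); apply: within_path. Qed.

Definition depth v := ex_minn (within_ex v).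

Lemma depthP v : within (depth v) v.
Proof. by rewrite /depth; case: ex_minnP. Qed.

Lemma depth_min v k : within k v -> depth v <= k.
Proof. by rewrite /depth; case: ex_minnP => m _ H /H. Qed.

Lemma depth_r : depth r = 0.
Proof. by apply/eqP; rewrite -leqn0; apply: depth_min; rewrite /= eqxx. Qed.

Lemma depth0 v : depth v = 0 -> v = r.
Proof. by move=> H; have := depthP v; rewrite H /= => /eqP. Qed.

Lemma depth_edge u v : e u v -> depth v <= (depth u).+1.
Proof.
move=> Huv; apply: depth_min => /=; apply/orP; right; apply/existsP; exists u.
by rewrite depthP.
Qed.

Lemma depth_par_ex v : v != r -> exists2 u, e u v & (depth u).+1 = depth v.
Proof.
move=> Hv; have := depthP v; case E: (depth v) => [|k] /=.
  by move/eqP => H; rewrite H eqxx in Hv.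
case/orP => [/depth_min|/existsP[u /andP[Hu He]]]; first by rewrite E; lia.
exists u => //; have := depth_min Hu; have := depth_edge He; rewrite E; lia.
Qed.

Lemma depth_side v : side v = side r (+) odd (depth v).
Proof.
have H : forall k v, depth v = k -> side v = side r (+) odd k; last exact: H.
elim=> [|k IH] w Hw; first by rewrite (depth0 Hw) addbF.
have Hr : w != r by apply/eqP => Er; rewrite Er depth_r in Hw.
have [u He Hu] := depth_par_ex Hr.
have Hu' : depth u = k by lia.
have := eside He; rewrite (IH u Hu') => Hs.
by move: Hs; rewrite /=; case: (side w); case: (side r); case: (odd k).
Qed.

Lemma depth_adj u v : e u v -> (depth u).+1 = depth v \/ (depth v).+1 = depth u.
Proof.
move=> He; have H1 := depth_edge He; rewrite esym in He; have H2 := depth_edge He.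
have Hs := eside He; rewrite (depth_side u) (depth_side v) in Hs.
have : depth u != depth v by apply/eqP => E; rewrite E eqxx in Hs.
clear Hs He; lia.
Qed.

Definition par v := if v == r then r else odflt r [pick u | e u v && ((depth u).+1 == depth v)].

Lemma parP v : v != r -> e (par v) v /\ (depth (par v)).+1 = depth v.
Proof.
move=> Hv; rewrite /par (negbTE Hv); case: pickP => [u /andP[? /eqP ?] //|none].
by have [u Hu1 Hu2] := depth_par_ex Hv; have := none u; rewrite Hu1 Hu2 eqxx.
Qed.

Lemma neq_r v : 0 < depth v -> v != r.
Proof. by move=> H; apply/eqP => E; rewrite E depth_r in H. Qed.

Lemma depth_iter t u : t <= depth u -> depth (iter t par u) = depth u - t.
Proof.
elim: t => [|t IH] Ht; first by rewrite subn0.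
have IH' := IH (ltnW Ht).
have Hr : iter t par u != r by apply: neq_r; rewrite IH'; lia.
have [_ H] := parP Hr; rewrite iterS; lia.
Qed.

Lemma iter_depth u : iter (depth u) par u = r.
Proof. by apply: depth0; rewrite depth_iter // subnn. Qed.

Lemma path_traject x k : k <= depth x -> path e x (traject par (par x) k).
Proof.
elim: k x => [//|k IH] x Hk /=.
have Hr : x != r by apply: neq_r; lia.
have [He Hd] := parP Hr; rewrite esym He /=; apply: IH; lia.
Qed.

Lemma belast_traject (T : Type) (f : T -> T) x k : belast x (traject f (f x) k) = traject f x k.
Proof. by elim: k x => //= k IH x; rewrite IH. Qed.

Lemma uniq_traject x k : k <= depth x -> uniq (traject par x k.+1).
Proof.
move=> Hk; rewrite looping_uniq; apply/negP => /trajectP[i Hi E].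
have := depth_iter Hk; rewrite E depth_iter; lia.
Qed.

Lemma par_unique u u' v : e u v -> e u' v -> (depth u).+1 = depth v ->
  (depth u').+1 = depth v -> u = u'.
Proof.
move=> Hu Hu' Du Du'; apply/eqP/negPn/negP => Nuu'.
have D' : depth u' = depth u by lia.
have ex : exists m, iter m par u == iter m par u'.
  by exists (depth u); rewrite iter_depth -D' iter_depth.
case: (ex_minnP ex) => m /eqP Hm Hmin.
have m1 : 0 < m by case: m Hm {Hmin} => //= E; rewrite E eqxx in Nuu'.
have mD : m <= depth u by apply: Hmin; rewrite iter_depth -D' iter_depth.
set c := v :: traject par u m.+1 ++ rev (traject par u' m).
have Hmem : forall x, x \in traject par u m.+1 ++ rev (traject par u' m) ->
   depth x <= depth u.
  move=> x; rewrite mem_cat mem_rev => /orP[] /trajectP[i Hi ->];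
   rewrite depth_iter; lia.
apply: (negP (acyc (c := c) _ _)).
- rewrite /c cons_uniq; apply/andP; split.
    by apply/negP => /Hmem; lia.
  rewrite cat_uniq rev_uniq uniq_traject //=.
  case: m m1 {Hm Hmin mD Hmem c} (Hmin) (mD) => // m _ Hmin mD.
  rewrite uniq_traject ?andbT; last by lia.
  apply/hasPn => x; rewrite mem_rev => /trajectP[i Hi ->].
  rewrite -trajectS; apply/negP => /trajectP[i' Hi' E].
  have := depth_iter (_ : i' <= depth u); have := depth_iter (_ : i <= depth u').
  rewrite -E => H1 H2; have Eii : i = i' by move: (H1 ltac:(lia)) (H2 ltac:(lia)); lia.
  subst i'; have := Hmin i; rewrite E eqxx => /(_ isT); lia.
- by rewrite /c /= size_cat size_rev !size_traject; lia.
- rewrite /c /= rcons_cat cat_path /= esym Hu path_traject //=.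
  rewrite last_traject Hm.
  case: m m1 Hm Hmin mD {Hmem c} => // m _ Hm Hmin mD.
  rewrite rcons_path -{1}(last_traject par u' m.+1) -(belast_traject par u' m.+1) rev_path.
  rewrite (eq_path (e' := e)); last by move=> a b; rewrite esym.
  rewrite path_traject; last by lia.
  by rewrite /= rev_cons last_rcons.
Qed.

Lemma adj_par u v : e u v -> (v != r /\ par v = u) \/ (u != r /\ par u = v).
Proof.
move=> He; case: (depth_adj He) => D.
  have Hr : v != r by apply: neq_r; lia.
  have [He' Hd] := parP Hr; left; split => //; apply: par_unique He' He _ _; lia.
rewrite esym in He.
have Hr : u != r by apply: neq_r; lia.
have [He' Hd] := parP Hr; right; split => //; apply: par_unique He' He _ _; lia.
Qed.

End Rooted.


Lemma cyc3 n d (T1 T2 : bgraph n d) (I : {set 'I_d}) (c : 'I_d -> 'I_n) (g : 'I_n -> 'I_d) :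
  compatible T1 T2 ->
  (forall x, x \in I -> (c x, x) \in T1) ->
  (forall x, x \in I -> (c x, g (c x)) \in T2) ->
  (forall x, x \in I -> g (c x) \in I) ->
  {in I &, injective c} -> {in I &, injective (g \o c)} ->
  forall x0, x0 \in I -> g (c x0) != x0 -> False.
Proof.
move=> comp H1 H2 HI injc injgc x0 Ix0 Hx0.
set J := c @: I.
set M1 := [set (c x, x) | x in I].
set M2 := [set (c x, g (c x)) | x in I].
have surj : forall y, y \in I -> exists2 x, x \in I & g (c x) = y.
  have Hsub : (g \o c) @: I \subset I by apply/subsetP => y /imsetP[x Ix ->]; exact: HI.
  have : (g \o c) @: I == I by rewrite eqEcard Hsub (card_in_imset injgc) leqnn.
  move=> /eqP E y Iy; rewrite -E in Iy; case/imsetP: Iy => x Ix ->; by exists x.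
have P1 : perfect_matching_in T1 J I M1.
  split.
  - by apply/subsetP => z /imsetP[x Ix ->]; exact: H1.
  - by move=> z /imsetP[x Ix ->]; split => //=; apply: imset_f.
  - move=> i /imsetP[x Ix ->]; rewrite -(cards1 x); apply: eq_card => y.
    rewrite !inE; apply/imsetP/eqP => [[z Iz [/injc E ->]]|->]; last by exists x.
    by rewrite E.
  - move=> j Ij; rewrite -(cards1 (c j)); apply: eq_card => i.
    rewrite !inE; apply/imsetP/eqP => [[z Iz [-> ->]]|->] //; by exists j.
have P2 : perfect_matching_in T2 J I M2.
  split.
  - by apply/subsetP => z /imsetP[x Ix ->]; exact: H2.
  - by move=> z /imsetP[x Ix ->]; split => /=; [apply: imset_f | apply: HI].
  - move=> i /imsetP[x Ix ->]; rewrite -(cards1 (g (c x))); apply: eq_card => y.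
    rewrite !inE; apply/imsetP/eqP => [[z Iz [/injc E ->]]|->]; last by exists x.
    by rewrite E.
  - move=> j Ij; have [x Ix Ex] := surj j Ij.
    rewrite -(cards1 (c x)); apply: eq_card => i.
    rewrite !inE; apply/imsetP/eqP => [[z Iz [-> E]]|->]; last by exists x; rewrite ?Ex.
    by rewrite (injgc z x) //= -E Ex.
have E := comp J I M1 M2 P1 P2.
have : (c x0, x0) \in M2 by rewrite -E; apply: imset_f.
case/imsetP => z Iz [Ec Ex]; have Ez := injc _ _ Ix0 Iz Ec; subst z.
by rewrite -Ex eqxx in Hx0.
Qed.


Lemma iter_mult (T : Type) (f : T -> T) x k m : iter k f x = x -> iter (m * k) f x = x.
Proof. by move=> H; rewrite iterM; apply: iter_fix. Qed.

Lemma fun_eq n d (T1 T2 : bgraph n d) (f g : 'I_n -> 'I_d) :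
  compatible T1 T2 ->
  (forall i, (i, f i) \in T1) -> (forall i, (i, g i) \in T2) ->
  (forall j, #|[set i | f i == j]| = #|[set i | g i == j]|) ->
  forall i, f i = g i.
Proof.
move=> comp Hf Hg Hfib i0; apply/eqP/negPn/negP => Hi0.
set B := [set i | f i != g i].
have fibD : forall j, #|[set i | f i == j] :&: B| = #|[set i | g i == j] :&: B|.
  move=> j; have E1 := cardsID B [set i | f i == j]; have E2 := cardsID B [set i | g i == j].
  have E : [set i | f i == j] :\: B = [set i | g i == j] :\: B.
    apply/setP => i; rewrite !inE; case: eqP => //= ->; by case: eqP.
  move: E1 E2; rewrite E Hfib; lia.
set cp := fun j => [pick i in [set i | f i == j] :&: B].
set c := fun j => odflt i0 (cp j).
set dom := fun j => cp j != None.
have domg : forall i, i \in B -> dom (g i).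
  move=> i Bi; rewrite /dom /cp; case: pickP => // H.
  have : #|[set i' | f i' == g i] :&: B| = 0 by apply: eq_card0 => x; rewrite H.
  rewrite fibD => /eqP; rewrite cards_eq0 => /eqP E.
  have : i \in [set i' | g i' == g i] :&: B by rewrite !inE eqxx /=; rewrite inE in Bi.
  by rewrite E inE.
have cP : forall j, dom j -> c j \in B /\ f (c j) = j.
  move=> j; rewrite /dom /c /cp; case: pickP => [x|]; last by [].
  by rewrite !inE => /andP[/eqP ? ?] _; split.
set succ := fun j => g (c j).
have domS : forall j, dom j -> dom (succ j) by move=> j /cP[Bc _]; apply: domg.
have domI : forall k j, dom j -> dom (iter k succ j).
  by elim=> //= k IH j Hj; apply: domS; apply: IH.
set x0 := g i0.
have dx0 : dom x0 by apply: domg; rewrite inE.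
set N := #|'I_d|.
have loop : looping succ x0 N.
  rewrite -[looping _ _ _]negbK -looping_uniq; apply/negP => /card_uniqP.
  rewrite size_traject => E; have := max_card (mem (traject succ x0 N.+1)).
  by rewrite E ltnn.
case/trajectP: loop => i Hi Ei.
set P := [set x | dom x && [exists k : 'I_N, iter k.+1 succ x == x]].
have Py : iter i succ x0 \in P.
  rewrite inE domI //=; apply/existsP.
  have Hk : N - i - 1 < N by lia.
  exists (Ordinal Hk) => /=; rewrite -iterD -iterS.
  have -> : (N - i - 1 + i).+1 = N by lia.
  by rewrite Ei.
have Pper : forall x, x \in P -> exists k, iter k.+1 succ x = x.
  by move=> x; rewrite inE => /andP[_ /existsP[k /eqP Hk]]; exists k.
apply: (@cyc3 n d T1 T2 P c g comp _ _ _ _ _ (iter i succ x0) Py).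
- move=> x; rewrite inE => /andP[/cP[_ E] _]; have := Hf (c x); by rewrite E.
- by move=> x _; apply: Hg.
- move=> x; rewrite inE => /andP[dx /existsP[k /eqP Hk]].
  rewrite inE; apply/andP; split; first exact: domS.
  apply/existsP; exists k; rewrite -/(succ x) -iterSr iterS Hk //.
- move=> x y; rewrite !inE => /andP[/cP[_ Ex] _] /andP[/cP[_ Ey] _] E.
  by rewrite -Ex -Ey E.
- move=> x y Px Py' /= E.
  have [k1 H1] := Pper x Px; have [k2 H2] := Pper y Py'.
  have Hx := iter_mult k2.+1 H1; have Hy := iter_mult k1.+1 H2.
  rewrite mulnC in Hy.
  have HK : 0 < k2.+1 * k1.+1 by rewrite muln_gt0.
  move: Hx Hy; rewrite -(prednK HK) => Hx Hy.
  have E' : succ x = succ y by exact: E.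
  by rewrite -[x]Hx -[y]Hy !iterSr E'.
- have dy : dom (iter i succ x0) by apply: domI.
  have [Bc Ec] := cP _ dy.
  by move: Bc; rewrite inE Ec eq_sym.
Qed.


Definition bside n d (v : bvert n d) : bool := if v is inl _ then true else false.

Lemma bsym n d (T : bgraph n d) : symmetric (badj T).
Proof. by case=> [i|j] [i'|j']. Qed.

Lemma bside_adj n d (T : bgraph n d) u v : badj T u v -> bside u != bside v.
Proof. by case: u v => [i|j] [i'|j']. Qed.

Section Tree.
Variables (n d : nat) (T : bgraph n d) (p0 : 'I_d).
Hypothesis HT : spanning_tree T.

Definition connT : forall u v : bvert n d, connect (badj T) u v := proj1 HT.
Local Notation conn := connT.
Definition acycT : forall c : seq (bvert n d), uniq c -> 2 < size c -> ~~ cycle (badj T) c := proj2 HT.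
Local Notation acyc := acycT.
Local Notation r := (inr p0 : bvert n d).
Local Notation P := (par conn r).
Local Notation D := (depth conn r).

Let adjP u v (H : badj T u v) := adj_par (@bsym n d T) (@bside_adj n d T) conn acyc r H.

Definition piT i : 'I_d := if P (inl i) is inr j then j else p0.

Lemma par_left i : P (inl i) = inr (piT i).
Proof.
have Hr : (inl i : bvert n d) != r by [].
have [He _] := parP conn Hr; move: He; rewrite /piT; by case: (P (inl i)).
Qed.

Lemma edge_pi i : (i, piT i) \in T.
Proof.
have Hr : (inl i : bvert n d) != r by [].
by have [He _] := parP conn Hr; rewrite  par_left in He.
Qed.

Lemma dep_left i : (D (inr (piT i))).+1 = D (inl i).
Proof.
have Hr : (inl i : bvert n d) != r by [].
by have [_ Hd] := parP conn Hr; rewrite  par_left in Hd.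
Qed.

Lemma pi_root i : (i, p0) \in T -> piT i = p0.
Proof.
move=> H; case: (adjP (u := inl i) (v := inr p0) H) => [[Hn _]|[_ E]].
  by rewrite eqxx in Hn.
by rewrite  par_left in E; case: E.
Qed.

Lemma fiber j : #|[set i | piT i == j]| + (j != p0) = rdeg T j.
Proof.
rewrite /rdeg; case: (eqVneq j p0) => [->|Hj] /=.
  rewrite addn0; apply: eq_card => i; rewrite !inE.
  by apply/eqP/idP => [<-|H]; [exact: edge_pi | exact: pi_root].
have Hr : (inr j : bvert n d) != r by apply/eqP => [[E]]; rewrite E eqxx in Hj.
have [He Hd] := parP conn Hr; move: He Hd; 
case E: (P (inr j)) => [sg|j'] //= He Hd.
have -> : [set i | (i, j) \in T] = sg |: [set i | piT i == j].
  apply/setP => i; rewrite !inE; apply/idP/orP => [H|[/eqP->|/eqP<-]] //; last exact: edge_pi.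
  case: (adjP (u := inl i) (v := inr j) H) => [[_ E']|[_ E']].
    by left; rewrite  E in E'; case: E' => ->.
  by right; rewrite  par_left in E'; case: E' => ->.
have Hn : sg \notin [set i | piT i == j].
  rewrite inE; apply/negP => /eqP Hp; have := dep_left sg; rewrite Hp  => H.
  by rewrite -H in Hd; move: Hd; move: (D (inr j)) => k; lia.
by rewrite cardsU1 Hn addnC.
Qed.

Section Part4.
Variables (T2 : bgraph n d) (s : 'I_n) (j : 'I_d).
Hypothesis comp : compatible T T2.
Hypothesis Hpi2 : forall i, (i, piT i) \in T2.
Hypothesis Hsp : (s, p0) \in T.
Hypothesis Hj2 : (s, j) \in T2.
Hypothesis Hjp : j != p0.
Hypothesis Hn : (s, j) \notin T.

Definition sig x : 'I_n := if P (inr x) is inl i then i else s.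

Lemma par_right x : x != p0 -> P (inr x) = inl (sig x).
Proof.
move=> Hx; have Hr : (inr x : bvert n d) != r by apply/eqP => [[E]]; rewrite E eqxx in Hx.
have [He _] := parP conn Hr; move: He; rewrite /sig; by case: (P (inr x)).
Qed.

Lemma edge_sig x : x != p0 -> (sig x, x) \in T.
Proof.
move=> Hx; have Hr : (inr x : bvert n d) != r by apply/eqP => [[E]]; rewrite E eqxx in Hx.
by have [He _] := parP conn Hr; rewrite  par_right in He.
Qed.

Lemma dep_right x : x != p0 -> (D (inl (sig x))).+1 = D (inr x).
Proof.
move=> Hx; have Hr : (inr x : bvert n d) != r by apply/eqP => [[E]]; rewrite E eqxx in Hx.
by have [_ Hd] := parP conn Hr; rewrite  par_right in Hd.
Qed.

Definition up x := piT (sig x).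
Definition stop x := (s, x) \in T.
Definition b u := iter u up j.

Lemma chain u : (forall u', u' < u -> ~~ stop (b u')) -> D (inr (b u)) + 2 * u = D (inr j).
Proof.
elim: u => [|u IH] H; first by rewrite addn0.
have IH' := IH (fun u' h => H u' (ltnW h)).
have Hb : b u != p0.
  by apply/eqP => E; have := H u (ltnSn u); rewrite /stop E Hsp.
have H1 := dep_right Hb; have H2 := dep_left (sig (b u)).
rewrite /b iterS -/(b u) -/(up (b u)) /up; rewrite /up in H1 H2.
rewrite -IH' -H1 -H2; move: (D _) => k; lia.
Qed.

Lemma part4 : False.
Proof.
have ex : exists u, stop (b u).
  case: (pickP (fun u : 'I_(D (inr j)).+1 => stop (b u))) => [u Hu|H]; first by exists u.
  exfalso; have := @chain (D (inr j)).+1 (fun u' Hu' => negbT (H (Ordinal Hu'))).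
  move: (D (inr j)) => k1; move: (D _) => k2; lia.
case: (ex_minnP ex) => t Ht Hmin.
have t0 : 0 < t by case: t Ht {Hmin} => //; rewrite /b /= /stop (negbTE Hn).
have Hch : forall u, u <= t -> D (inr (b u)) + 2 * u = D (inr j).
  move=> u Hu; apply: chain => u' Hu'; apply/negP => /Hmin; lia.
have binj : forall u v, u <= t -> v <= t -> b u = b v -> u = v.
  move=> u v Hu Hv E; have := Hch u Hu; have := Hch v Hv; rewrite E.
  move: (D (inr j)) => k1; move: (D _) => k2; lia.
have nb : forall u, u < t -> b u != p0.
  move=> u Hu; apply/eqP => E; have := Hmin u; rewrite /stop E Hsp => /(_ isT); lia.
have ns : forall u, u < t -> stop (b u) = false.
  by move=> u Hu; apply/negP => /Hmin; lia.
have sgs : forall u, u < t -> sig (b u) != s.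
  move=> u Hu; apply/eqP => E; have := edge_sig (nb u Hu); rewrite E -/(stop _) ns //.
set I := [set b (val u) | u : 'I_t.+1].
have memI : forall x, x \in I -> exists2 u, u <= t & x = b u.
  by move=> x /imsetP[u _ ->]; exists (val u); first exact: (ltn_ord u).
have Ib : forall u, u <= t -> b u \in I.
  by move=> u Hu; apply/imsetP; exists (Ordinal (Hu : u < t.+1)).
set c := fun x => if stop x then s else sig x.
set g := fun i => if i == s then j else piT i.
set nxt := fun u => if u < t then u.+1 else 0.
have gc : forall u, u <= t -> g (c (b u)) = b (nxt u).
  move=> u Hu; rewrite /c /g /nxt; case: (ltnP u t) => Hut.
    by rewrite ns // (negbTE (sgs u Hut)) /b iterS.
  have -> : u = t by lia.
  by rewrite Ht eqxx.
have gcinj : {in I &, injective (g \o c)}.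
  move=> x y /memI[u Hu ->] /memI[v Hv ->] /=; rewrite !gc // => /binj E.
  congr b; move: E; rewrite /nxt; case: (ltnP u t); case: (ltnP v t) => //= *; lia.
apply: (@cyc3 n d T T2 I c g comp _ _ _ _ gcinj (b 0) (Ib 0 (leq0n _))).
- move=> x /memI[u Hu ->]; rewrite /c; case: (ltnP u t) => Hut.
    by rewrite ns //; apply: edge_sig; apply: nb.
  have Eu : u = t by lia.
  by rewrite Eu Ht.
- move=> x /memI[u Hu ->]; rewrite /c; case: (ltnP u t) => Hut.
    by rewrite ns // /g (negbTE (sgs u Hut)).
  have Eu : u = t by lia.
  by rewrite Eu Ht /g eqxx.
- by move=> x /memI[u Hu ->]; rewrite gc //; apply: Ib; rewrite /nxt; case: ifP => //; lia.
- by move=> x y Hx Hy E; apply: gcinj => //=; rewrite E.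
- by rewrite gc // /nxt t0; apply/eqP => /binj; lia.
Qed.

End Part4.
End Tree.

Theorem lemma2p11 (n d : nat) (T1 T2 : bgraph n d) (p q : 'I_d) (s : 'I_n) :
  spanning_tree T1 -> spanning_tree T2 -> compatible T1 T2 ->
  (* right degree vectors v and v + e_p - e_q *)
  (forall j : 'I_d, rdeg T2 j + (j == q) = rdeg T1 j + (j == p)) ->
  (s, p) \in T1 ->
  (s, p) \in T2 /\ ldeg T1 s >= ldeg T2 s.
Proof.
move=> HT1 HT2 comp hdeg Hsp.
have Hfg : forall i, piT p HT1 i = piT q HT2 i.
  apply: (fun_eq comp (edge_pi p HT1) (edge_pi q HT2)) => j.
  have h1 := fiber p HT1 j; have h2 := fiber q HT2 j; have h := hdeg j.
  move: h h1 h2; case: (j == p); case: (j == q) => /=; lia.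
have fs : piT p HT1 s = p := pi_root HT1 Hsp.
split; first by have := edge_pi q HT2 s; rewrite -Hfg fs.
rewrite /ldeg; apply: subset_leq_card; apply/subsetP => j; rewrite !inE => Hj.
case: (eqVneq j p) => [->//|Hjp]; apply/negPn/negP => Hn.
apply: (@part4 n d T1 p HT1 T2 s j comp _ Hsp Hj Hjp Hn).
by move=> i; rewrite Hfg; apply: edge_pi.
Qed.
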